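(* Let $r\ge1$ and $f,g\in H^r(\mathbb{T})$. Then $$\big\||\partial_x|^{-2}\big[(|\partial_x|g)(|\partial_x|f)\big]\big\|_r\le C\|f\|_r\|g\|_r,$$ with a constant $C$ depending only on $r$.
   Context: $\mathbb{T}=[-\pi,\pi]$ periodic; $\widehat f_k=\frac1{2\pi}\int_{\mathbb T}f(x)e^{-ikx}dx$; $\|f\|_r^2=\sum_k(1+k^2)^r|\widehat f_k|^2$ is the $H^r$ norm. For $\alpha\in\mathbb R$, $|\partial_x|^\alpha f=\sum_{k\neq0}|k|^\alpha\widehat f_ke^{ikx}$. *)

(* Defs.v *)
From HB Require Import structures.
From mathcomp Require Import all_boot all_order all_algebra.
From mathcomp Require Import all_classical all_reals all_analysis.
From mathcomp Require Import complex.
Import Order.TTheory GRing.Theory Num.Theory.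
Import numFieldNormedType.Exports.

Set Implicit Arguments.
Unset Strict Implicit.
Unset Printing Implicit Defensive.

Local Open Scope ring_scope.
Local Open Scope complex_scope.
Local Open Scope classical_set_scope.

Section Fourier.
Variable R : realType.

(* The torus T = [-pi, pi]; functions on T are functions R -> R[i],
   only their values on [-pi, pi] matter. *)
Definition torus : set R := `[(- pi)%R, pi]%classic.

(* Fourier coefficient  fhat_k = 1/(2 pi) \int_T f(x) e^{-ikx} dx,
   written out in real and imaginary parts
   (f e^{-ikx} = (a cos + b sin) + i (b cos - a sin) with f = a + i b). *)
Definition fhat (f : R -> R[i]) (k : int) : R[i] :=
  let a x := complex.Re (f x) in
  let b x := complex.Im (f x) in
  let kx x := (k%:~R * x)%R in
  ((2 * pi)^-1)%R%:C *
  (Rintegral (@lebesgue_measure R) torus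
      (fun x => a x * cos (kx x) + b x * sin (kx x))%R
   +i*
   Rintegral (@lebesgue_measure R) torus
      (fun x => b x * cos (kx x) - a x * sin (kx x))%R).

Definition Hsnorm2 (r : R) (c : int -> R[i]) : \bar R :=
  (\esum_(k in [set: int])
     (((1 + (k%:~R : R) ^+ 2) `^ r) *
      ((complex.Re (c k)) ^+ 2 + (complex.Im (c k)) ^+ 2))%:E)%E.

Definition Hnorm (r : R) (c : int -> R[i]) : \bar R :=
  match Hsnorm2 r c with
  | EFin x => (Num.sqrt x)%:E
  | y => y
  end.

(* f is in H^r(T): f is (Lebesgue) integrable on T (so that its Fourier
   coefficients are defined) and its H^r norm is finite. *)
Definition inHr (r : R) (f : R -> R[i]) : Prop :=
  (@lebesgue_measure R).-integrable torus (EFin \o (fun x => complex.Re (f x))) /\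
  (@lebesgue_measure R).-integrable torus (EFin \o (fun x => complex.Im (f x))) /\
  (Hnorm r (fhat f) < +oo)%E.

(* sum over Z of a complex sequence, as the limit of the symmetric
   partial sums  sum_{|j| <= N} a_j  (real and imaginary parts). *)
Definition zpartial (a : int -> R[i]) (N : nat) : R[i] :=
  \sum_(i < (2 * N).+1) a (i%:Z - N%:Z).

Definition zsum (a : int -> R[i]) : R[i] :=
  limn (fun N => complex.Re (zpartial a N)) +i*
  limn (fun N => complex.Im (zpartial a N)).

(* Fourier multiplier |d_x|^alpha on coefficients: zero mode removed *)
Definition absD (alpha : R) (c : int -> R[i]) (k : int) : R[i] :=
  if k == 0 then 0 else ((`|k|%:~R : R) `^ alpha)%:C * c k.

(* Fourier coefficients of the product of two functions with
   coefficients c and d (convolution). *)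
Definition fconv (c d : int -> R[i]) (k : int) : R[i] :=
  zsum (fun j => c (k - j) * d j).

End Fourier.

(* Main.v *)
Require Import Defs.
From HB Require Import structures.
From mathcomp Require Import all_boot all_order all_algebra.
From mathcomp Require Import all_classical all_reals all_analysis.
From mathcomp Require Import complex.
From mathcomp Require Import zify ring lra.
Import Order.TTheory GRing.Theory Num.Theory.
Import numFieldNormedType.Exports.
Local Open Scope ring_scope.
Local Open Scope classical_set_scope.

Section L5.
Variable R : realType.

Definition symS (h : int -> R) (N : nat) : R :=
  \sum_(0 <= i < (2*N).+1) h (i%:Z - N%:Z).

Lemma S_rec h N : symS h N.+1 = h (- (N.+1)%:Z) + symS h N + h (N.+1)%:Z.
Proof.
rewrite /symS.
have -> : (2 * N.+1).+1 = ((2*N).+1).+2 by lia.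
rewrite big_nat_recl // big_nat_recr //= addrA.
congr (_ + _ + _).
- by congr h; lia.
- by apply: eq_bigr => i _; congr h; lia.
- by congr h; lia.
Qed.

Lemma S_ge0 h N : (forall k, 0 <= h k) -> 0 <= symS h N.
Proof. by move=> h0; apply: sumr_ge0 => i _. Qed.

Lemma S_mono h N : (forall k, 0 <= h k) -> symS h N <= symS h N.+1.
Proof. move=> h0; rewrite S_rec; have := h0 (- (N.+1)%:Z); have := h0 (N.+1)%:Z; lra. Qed.

Lemma S_nd h : (forall k, 0 <= h k) -> nondecreasing_seq (symS h).
Proof.
move=> h0; apply/nondecreasing_seqP => n; exact: S_mono.
Qed.

Definition box (N : nat) : set int := [set j | (absz j <= N)%N].

Lemma box_img N : box N = (fun i : nat => i%:Z - N%:Z) @` `I_((2*N).+1).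
Proof.
apply/seteqP; split => [j hj | _ [i /= hi <-]].
  rewrite /box /= in hj; by exists (absz (j + N%:Z)); rewrite /=; lia.
rewrite /box /=; lia.
Qed.

Lemma finite_box N : finite_set (box N).
Proof. by rewrite box_img; apply: finite_image; apply: finite_II. Qed.

Lemma S_box h N : (\sum_(j \in box N) (h j)%:E)%E = (symS h N)%:E.
Proof.
rewrite box_img fsbig_image; last by move=> x y _ _ /=; lia.
by rewrite -fsbig_ord sumEFin /symS big_mkord.
Qed.

Lemma esum_bound (F : int -> R) M : (forall k, 0 <= F k) ->
  (forall N, symS F N <= M) -> (\esum_(k in [set: int]) (F k)%:E <= M%:E)%E.
Proof.
move=> F0 FM; apply: ge_ereal_sup => _ [X [finX _] <-].
pose N := (\max_(x <- finmap.enum_fset (fset_set X)) absz x)%N.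
apply: (@le_trans _ _ (\sum_(j \in box N) (F j)%:E)%E).
  apply: lee_fsum_nneg_subset => //; first exact: finite_box.
    move=> x; rewrite !inE /box /= => Xx.
    rewrite /N; apply: (@leq_bigmax_seq _ _ xpredT (fun y : int => absz y) x) => //.
    by rewrite in_fset_set // inE.
  by move=> t _; rewrite lee_fin.
by rewrite S_box lee_fin.
Qed.

Lemma esum_lower (F : int -> R) M : (forall k, 0 <= F k) ->
  (\esum_(k in [set: int]) (F k)%:E)%E = M%:E -> forall N, symS F N <= M.
Proof.
move=> F0 E N; rewrite -lee_fin -S_box -E; apply: esum_ge.
by exists (box N) => //; split; [exact: finite_box | by []].
Qed.

Lemma esum_shift (F : int -> \bar R) (k : int) :
  (\esum_(j in [set: int]) F j = \esum_(j in [set: int]) F (k - j)%R)%E.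
Proof.
apply: (reindex_esum [set: int] [set: int] (fun j => k - j)).
split.
- by [].
- by move=> x y _ _ /= /eqP; rewrite (can_eq (addKr _)) (inj_eq oppr_inj) => /eqP.
- by move=> y _; exists (k - y) => //=; rewrite opprB addrC subrK.
Qed.

Definition hh (k : int) : R := ((k%:~R : R) ^+ 2)^-1.

Lemma hh_ge0 k : 0 <= hh k.
Proof. by rewrite /hh invr_ge0 sqr_ge0. Qed.

Lemma hhN k : hh (- k) = hh k.
Proof. by rewrite /hh rmorphN /= sqrrN. Qed.

Lemma hh_nat (m : nat) : hh m%:Z = ((m%:R : R) ^+ 2)^-1.
Proof. by rewrite /hh pmulrn. Qed.

Lemma hh_S N : symS hh N <= 4 - 4 / (N.+1)%:R.
Proof.
elim: N => [|N IH].
  by rewrite /symS big_nat1 /hh /= subrr expr0n /= invr0 divr1 subrr.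
rewrite S_rec hhN hh_nat.
move: IH.
have -> : (N.+2)%:R = (N.+1)%:R + 1 :> R by rewrite -addn1 natrD.
set n := (N.+1)%:R : R.
have n1 : 1 <= n by rewrite /n ler1n.
clearbody n.
have np : 0 < n by lra.
have n1p : 0 < n + 1 by lra.
have key : 2 / n ^+ 2 <= 4 / n - 4 / (n + 1).
  have n0 : n != 0 by rewrite gt_eqF.
  have n10 : n + 1 != 0 by rewrite gt_eqF.
  rewrite [4 / n - _](_ : _ = 4 / (n * (n + 1))); last by field; rewrite n0 n10.
  rewrite ler_pdivrMr ?exprn_gt0 //.
  rewrite mulrAC ler_pdivlMr ?mulr_gt0 //.
  nra.
move=> IH.
have e : (n ^+ 2)^-1 = 1 / n ^+ 2 by rewrite div1r.
rewrite e.
lra.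
Qed.

Lemma esum_hh (c : R) : 0 <= c ->
  (\esum_(k in [set: int]) (c * hh k)%:E <= (4 * c)%:E)%E.
Proof.
move=> c0; apply: esum_bound => [k|N]; first by rewrite mulr_ge0 ?hh_ge0.
rewrite /symS -mulr_sumr -/(symS hh N) mulrC ler_wpM2r //.
apply: (le_trans (hh_S N)); rewrite gerBl divr_ge0 //.
Qed.

Lemma symS_add f g N : symS (fun j => f j + g j) N = symS f N + symS g N.
Proof. by rewrite /symS big_split. Qed.

Lemma Re_sum (I : Type) (s : seq I) (F : I -> R[i]) :
  complex.Re (\sum_(i <- s) F i) = \sum_(i <- s) complex.Re (F i).
Proof.
elim: s => [|a s IH]; first by rewrite !big_nil.
by rewrite !big_cons -IH; case: (F a) => ? ?; case: (\sum_(j <- s) F j).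
Qed.

Lemma Im_sum (I : Type) (s : seq I) (F : I -> R[i]) :
  complex.Im (\sum_(i <- s) F i) = \sum_(i <- s) complex.Im (F i).
Proof.
elim: s => [|a s IH]; first by rewrite !big_nil.
by rewrite !big_cons -IH; case: (F a) => ? ?; case: (\sum_(j <- s) F j).
Qed.

Lemma Re_zpartial (x : int -> R[i]) N :
  complex.Re (zpartial x N) = symS (fun j => complex.Re (x j)) N.
Proof. by rewrite /zpartial /symS big_mkord Re_sum. Qed.

Lemma Im_zpartial (x : int -> R[i]) N :
  complex.Im (zpartial x N) = symS (fun j => complex.Im (x j)) N.
Proof. by rewrite /zpartial /symS big_mkord Im_sum. Qed.

Lemma cvg_symS (g : int -> R) D :
  (forall N, symS (fun j => `|g j|) N <= D) -> cvgn (symS g).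
Proof.
move=> gD.
have -> : symS g = (fun N => symS (fun j => `|g j| + g j) N - symS (fun j => `|g j|) N).
  by apply/funext => N; rewrite symS_add addrC addKr.
have nn1 : forall k, 0 <= `|g k| + g k.
  by move=> k; have := ler_norm (- g k); rewrite normrN; lra.
apply: is_cvgB.
  apply: nondecreasing_is_cvgn; first exact: S_nd.
  exists (2 * D) => _ [n _ <-].
  rewrite symS_add mulr2n mulrDl mul1r.
  apply: lerD => //; apply: (le_trans _ (gD n)); apply: ler_sum => i _; exact: ler_norm.
apply: nondecreasing_is_cvgn; first by apply: S_nd => k; exact: normr_ge0.
by exists D => _ [n _ <-].
Qed.

Lemma zsum_bound (x : int -> R[i]) D :
  (forall N, symS (fun j => `|complex.Re (x j)| + `|complex.Im (x j)|) N <= D) ->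
  (complex.Re (zsum x))^+2 + (complex.Im (zsum x))^+2 <= D^+2.
Proof.
move=> xD.
set gR := fun j => complex.Re (x j).
set gI := fun j => complex.Im (x j).
have eR : (fun N => complex.Re (zpartial x N)) = symS gR.
  by apply/funext => N; rewrite Re_zpartial.
have eI : (fun N => complex.Im (zpartial x N)) = symS gI.
  by apply/funext => N; rewrite Im_zpartial.
have bR : forall N, symS (fun j => `|gR j|) N <= D.
  move=> N; apply: le_trans (xD N); apply: ler_sum => i _.
  by rewrite lerDl normr_ge0.
have bI : forall N, symS (fun j => `|gI j|) N <= D.
  move=> N; apply: le_trans (xD N); apply: ler_sum => i _.
  by rewrite lerDr normr_ge0.
have cR := cvg_symS _ _ bR.
have cI := cvg_symS _ _ bI.
rewrite /zsum /= eR eI.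
set lR := limn (symS gR).
set lI := limn (symS gI).
have cvR : symS gR @ \oo --> lR by exact: cR.
have cvI : symS gI @ \oo --> lI by exact: cI.
have cvS : (fun N => `|symS gR N| + `|symS gI N|) @ \oo --> `|lR| + `|lI|.
  by apply: cvgD; apply: cvg_norm.
have le : `|lR| + `|lI| <= D.
  rewrite -(cvg_lim _ cvS) //.
  apply: limr_le; first by apply/cvg_ex; exists (`|lR| + `|lI|).
  near=> N.
  apply: le_trans (xD N).
  rewrite symS_add; apply: lerD; apply: ler_norm_sum.
have aR := normr_ge0 lR.
have aI := normr_ge0 lI.
rewrite -[lR ^+ 2]real_normK ?num_real // -[lI ^+ 2]real_normK ?num_real //.
nra.
Unshelve. all: end_near.
Qed.

Lemma CS (n : nat) (t P Q : nat -> R) (c : R) : 0 <= c ->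
  (forall i, 0 <= t i) -> (forall i, 0 <= P i) -> (forall i, 0 <= Q i) ->
  (forall i, t i ^+ 2 <= c * P i * Q i) ->
  (\sum_(0 <= i < n) t i) ^+ 2 <=
    c * (\sum_(0 <= i < n) P i) * (\sum_(0 <= i < n) Q i).
Proof.
move=> c0 t0 P0 Q0 tPQ.
have pair i j : 2 * (t i * t j) <= c * (P i * Q j + P j * Q i).
  have h1 : 0 <= 2 * (t i * t j) by rewrite mulr_ge0 ?mulr_ge0.
  have h2 : 0 <= c * (P i * Q j + P j * Q i).
    by rewrite mulr_ge0 ?addr_ge0 ?mulr_ge0.
  rewrite -(@ler_pXn2r _ 2%N) ?nnegrE //.
  set v := (P i * Q j) * (P j * Q i).
  set S := P i * Q j + P j * Q i.
  have e1 : (t i * t j) ^+ 2 <= c ^+ 2 * v.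
    have -> : c ^+ 2 * v = (c * P i * Q i) * (c * P j * Q j) by rewrite /v; ring.
    by rewrite exprMn; apply: ler_pM; rewrite ?sqr_ge0.
  have e2 : 4 * v <= S ^+ 2.
    have := sqr_ge0 (P i * Q j - P j * Q i); rewrite /v /S sqrrB sqrrD; lra.
  have c2 := sqr_ge0 c.
  have -> : (2 * (t i * t j)) ^+ 2 = 4 * (t i * t j) ^+ 2 by ring.
  have -> : (c * S) ^+ 2 = c ^+ 2 * S ^+ 2 by ring.
  nra.
have L : \sum_(0 <= i < n) \sum_(0 <= j < n) 2 * (t i * t j) <=
         \sum_(0 <= i < n) \sum_(0 <= j < n) c * (P i * Q j + P j * Q i).
  by apply: ler_sum => i _; apply: ler_sum => j _; exact: pair.
have L1 : \sum_(0 <= i < n) \sum_(0 <= j < n) 2 * (t i * t j) =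
          2 * (\sum_(0 <= i < n) t i) ^+ 2.
  rewrite expr2 big_distrlr mulr_sumr; apply: eq_bigr => i _.
  by rewrite mulr_sumr.
have R1 : \sum_(0 <= i < n) \sum_(0 <= j < n) c * (P i * Q j + P j * Q i) =
   c * (\sum_(0 <= i < n) \sum_(0 <= j < n) P i * Q j) +
   c * (\sum_(0 <= i < n) \sum_(0 <= j < n) P j * Q i).
  rewrite -mulrDr -big_split mulr_sumr; apply: eq_bigr => i _.
  by rewrite -big_split mulr_sumr.
have E2 : \sum_(0 <= i < n) \sum_(0 <= j < n) P i * Q j =
          (\sum_(0 <= i < n) P i) * (\sum_(0 <= i < n) Q i).
  by rewrite big_distrlr.
have E3 : \sum_(0 <= i < n) \sum_(0 <= j < n) P j * Q i =
          (\sum_(0 <= i < n) P i) * (\sum_(0 <= i < n) Q i).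
  rewrite mulrC big_distrlr; apply: eq_bigr => i _; apply: eq_bigr => j _.
  by rewrite mulrC.
rewrite L1 R1 E2 E3 in L.
lra.
Qed.

Lemma powR_split (r a : R) : 0 < a -> a `^ r = a `^ (r - 1) * a.
Proof.
move=> a0; rewrite -[in LHS](subrK 1 r) (@powRD _ a (r - 1) 1) ?powRr1 ?(ltW a0) //.
by apply/implyP => _; rewrite gt_eqF.
Qed.

Lemma weight (r x y : R) : 1 <= r -> 1 <= (x + y) ^+ 2 ->
  (1 + (x + y) ^+ 2) `^ r * x ^+ 2 * y ^+ 2 <=
  2 `^ r * (x + y) ^+ 2 * ((1 + x ^+ 2) `^ r * (1 + y ^+ 2) `^ r).
Proof.
move=> r1 k1.
set s := (x + y) ^+ 2.
set wx := 1 + x ^+ 2.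
set wy := 1 + y ^+ 2.
have x2 := sqr_ge0 x; have y2 := sqr_ge0 y.
have wx0 : 0 < wx by rewrite /wx; lra.
have wy0 : 0 < wy by rewrite /wy; lra.
have s0 : 0 <= s by rewrite /s sqr_ge0.
have wk0 : 0 < 1 + s by lra.
have r0 : 0 <= r - 1 by lra.
have hwk : 1 + s <= 2 * wx * wy.
  rewrite /s /wx /wy.
  have h1 := sqr_ge0 (x * y - 1).
  have h2 := mulr_ge0 x2 y2.
  have -> : (x + y) ^+ 2 = x ^+ 2 + y ^+ 2 + 2 * (x * y) by ring.
  have -> : 2 * (1 + x ^+ 2) * (1 + y ^+ 2) = 2 + 2 * x ^+ 2 + 2 * y ^+ 2 + 2 * (x ^+ 2 * y ^+ 2) by ring.
  have e : (x * y - 1) ^+ 2 = x ^+ 2 * y ^+ 2 - 2 * (x * y) + 1 by ring.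
  rewrite e in h1; lra.
have hp : (1 + s) `^ (r - 1) <= 2 `^ (r - 1) * (wx `^ (r - 1) * wy `^ (r - 1)).
  rewrite -!powRM ?(ltW wx0) ?(ltW wy0) ?mulr_ge0 ?(ltW wx0) ?(ltW wy0) //.
  apply: ge0_ler_powR => //; rewrite ?nnegrE ?mulr_ge0 ?(ltW wx0) ?(ltW wy0) //.
    lra.
  by rewrite mulrA.
rewrite (@powR_split r _ wk0) (@powR_split r _ wx0) (@powR_split r _ wy0).
rewrite (@powR_split r _ (ltr0Sn _ 1%N)).
have k1s : 1 <= s := k1.
have hs : 1 + s <= 2 * s by lra.
have hx : x ^+ 2 <= wx by rewrite /wx; lra.
have hy : y ^+ 2 <= wy by rewrite /wy; lra.
have p1 := powR_ge0 (1 + s) (r - 1).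
have p2 := powR_ge0 2 (r - 1).
have p3 := powR_ge0 wx (r - 1).
have p4 := powR_ge0 wy (r - 1).
apply: (@le_trans _ _ ((2 `^ (r - 1) * (wx `^ (r - 1) * wy `^ (r - 1))) * (2 * s) * wx * wy)).
  apply: ler_pM; [exact: (mulr_ge0 (mulr_ge0 p1 (ltW wk0)) x2) | exact: y2 | | exact: hy].
  apply: ler_pM; [exact: (mulr_ge0 p1 (ltW wk0)) | exact: x2 | | exact: hx].
  apply: ler_pM; [exact: p1 | exact: (ltW wk0) | exact: hp | exact: hs].
rewrite le_eqVlt; apply/orP; left; apply/eqP; ring.
Qed.

Local Open Scope complex_scope.
Definition nrm2 (z : R[i]) : R := complex.Re z ^+ 2 + complex.Im z ^+ 2.

Lemma Re_mul (u v : R[i]) :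
  complex.Re (u * v) = complex.Re u * complex.Re v - complex.Im u * complex.Im v.
Proof. by case: u => ? ?; case: v => ? ?. Qed.

Lemma Im_mul (u v : R[i]) :
  complex.Im (u * v) = complex.Re u * complex.Im v + complex.Im u * complex.Re v.
Proof. by case: u => ? ?; case: v => ? ?. Qed.

Lemma Re_scal (s : R) (z : R[i]) : complex.Re (s%:C * z) = s * complex.Re z.
Proof. by rewrite Re_mul /= mul0r subr0. Qed.

Lemma Im_scal (s : R) (z : R[i]) : complex.Im (s%:C * z) = s * complex.Im z.
Proof. by rewrite Im_mul /= mul0r addr0. Qed.

Lemma prodRI (u v : R[i]) :
  `|complex.Re (u * v)| + `|complex.Im (u * v)| <=
  (`|complex.Re u| + `|complex.Im u|) * (`|complex.Re v| + `|complex.Im v|).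
Proof.
rewrite Re_mul Im_mul.
have h1 := ler_normB (complex.Re u * complex.Re v) (complex.Im u * complex.Im v).
have h2 := ler_normD (complex.Re u * complex.Im v) (complex.Im u * complex.Re v).
rewrite !normrM in h1 h2.
have e : (`|complex.Re u| + `|complex.Im u|) * (`|complex.Re v| + `|complex.Im v|) =
  `|complex.Re u| * `|complex.Re v| + `|complex.Im u| * `|complex.Im v| +
  (`|complex.Re u| * `|complex.Im v| + `|complex.Im u| * `|complex.Re v|) by ring.
rewrite e; lra.
Qed.

Lemma absD1_Re (c : int -> R[i]) m :
  complex.Re (absD 1 c m) = `|(m%:~R : R)| * complex.Re (c m).
Proof.
rewrite /absD; case: eqP => [->|_]; first by rewrite normr0 mul0r.
by rewrite Re_scal powRr1 ?intr_norm // ler0z normr_ge0.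
Qed.

Lemma absD1_Im (c : int -> R[i]) m :
  complex.Im (absD 1 c m) = `|(m%:~R : R)| * complex.Im (c m).
Proof.
rewrite /absD; case: eqP => [->|_]; first by rewrite normr0 mul0r.
by rewrite Im_scal powRr1 ?intr_norm // ler0z normr_ge0.
Qed.

Lemma absDm2_nrm2 (c : int -> R[i]) k :
  nrm2 (absD (-2) c k) = hh k ^+ 2 * nrm2 (c k).
Proof.
rewrite /absD /nrm2; case: eqP => [->|/eqP k0].
  have -> : hh 0 = 0 by rewrite /hh /= expr0n /= invr0.
  by rewrite /= expr0n /= mul0r addr0.
rewrite powRN.
have -> : (`|k|%:~R : R) `^ 2 = (k%:~R : R) ^+ 2.
  by rewrite -[2]/(2%:R) powR_mulrn ?intr_norm ?real_normK ?num_real.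
have -> : ((k%:~R : R) ^+ 2)^-1 = hh k by [].
case: (c k) => a b /=; ring.
Qed.

Definition W (r : R) (n : int) : R := (1 + (n%:~R : R) ^+ 2) `^ r.

Lemma W_gt0 r n : 0 < W r n.
Proof. by apply: powR_gt0; have := sqr_ge0 (n%:~R : R); lra. Qed.

Lemma nrm2_ge0 z : 0 <= nrm2 z.
Proof. by rewrite /nrm2 addr_ge0 ?sqr_ge0. Qed.

Lemma ab2 (z : R[i]) : (`|complex.Re z| + `|complex.Im z|) ^+ 2 <= 2 * nrm2 z.
Proof.
rewrite /nrm2 -[complex.Re z ^+ 2]real_normK ?num_real // -[complex.Im z ^+ 2]real_normK ?num_real //.
have := sqr_ge0 (`|complex.Re z| - `|complex.Im z|).
have e1 : (`|complex.Re z| - `|complex.Im z|) ^+ 2 = `|complex.Re z| ^+ 2 + `|complex.Im z| ^+ 2 - 2 * (`|complex.Re z| * `|complex.Im z|) by ring.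
have e2 : (`|complex.Re z| + `|complex.Im z|) ^+ 2 = `|complex.Re z| ^+ 2 + `|complex.Im z| ^+ 2 + 2 * (`|complex.Re z| * `|complex.Im z|) by ring.
rewrite e1 e2; lra.
Qed.

Lemma shifted_bound r (b : int -> R[i]) B (k : int) :
  Hsnorm2 r b = B%:E ->
  forall N, symS (fun j => W r (k - j) * nrm2 (b (k - j))) N <= B.
Proof.
move=> HB N.
apply: (@esum_lower (fun j => W r (k - j) * nrm2 (b (k - j)))).
  by move=> j; rewrite mulr_ge0 ?nrm2_ge0 ?(ltW (W_gt0 _ _)).
rewrite -HB /Hsnorm2.
by rewrite (esum_shift (fun m => (W r m * nrm2 (b m))%:E) k).
Qed.

Lemma conv_bound (r : R) (a b : int -> R[i]) (A B : R) (k : int) :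
  1 <= r -> Hsnorm2 r a = A%:E -> Hsnorm2 r b = B%:E -> k != 0 ->
  nrm2 (fconv (absD 1 b) (absD 1 a) k) <=
    4 * (2 `^ r * (k%:~R : R) ^+ 2 / W r k) * A * B.
Proof.
move=> r1 HA HB k0.
have A0 : 0 <= A.
  have : (0 <= Hsnorm2 r a)%E.
    apply: esum_ge0 => j _.
    by rewrite lee_fin mulr_ge0 ?nrm2_ge0 ?(ltW (W_gt0 _ _)).
  by rewrite HA lee_fin.
have B0 : 0 <= B.
  have : (0 <= Hsnorm2 r b)%E.
    apply: esum_ge0 => j _.
    by rewrite lee_fin mulr_ge0 ?nrm2_ge0 ?(ltW (W_gt0 _ _)).
  by rewrite HB lee_fin.
set c := 2 `^ r * (k%:~R : R) ^+ 2 / W r k.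
have c0 : 0 <= c.
  rewrite /c; apply: mulr_ge0; first by apply: mulr_ge0; [exact: powR_ge0 | exact: sqr_ge0].
  by rewrite invr_ge0 (ltW (W_gt0 _ _)).
pose al j := `|complex.Re (a j)| + `|complex.Im (a j)|.
pose be j := `|complex.Re (b j)| + `|complex.Im (b j)|.
pose t j := `|((k - j)%:~R : R)| * `|(j%:~R : R)| * be (k - j) * al j.
pose P j := W r (k - j) * be (k - j) ^+ 2.
pose Q j := W r j * al j ^+ 2.
have al0 j : 0 <= al j by rewrite addr_ge0.
have be0 j : 0 <= be j by rewrite addr_ge0.
have t0 j : 0 <= t j by rewrite !mulr_ge0.
have P0 j : 0 <= P j by rewrite mulr_ge0 ?sqr_ge0 ?(ltW (W_gt0 _ _)).
have Q0 j : 0 <= Q j by rewrite mulr_ge0 ?sqr_ge0 ?(ltW (W_gt0 _ _)).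
have k1 : 1 <= (k%:~R : R) ^+ 2.
  rewrite -real_normK ?num_real // -intr_norm.
  have : (1 <= `|k|)%R by rewrite -gtz0_ge1 normr_gt0.
  rewrite -(ler1z R) => h; nra.
have tPQ j : t j ^+ 2 <= c * P j * Q j.
  have := @weight r ((k - j)%:~R) (j%:~R) r1.
  rewrite -rmorphD /= subrK => /(_ k1) hw.
  have Wk := W_gt0 r k.
  have e1 : t j ^+ 2 = ((1 + (k%:~R : R) ^+ 2) `^ r * ((k - j)%:~R : R) ^+ 2 * (j%:~R : R) ^+ 2) * (be (k - j) ^+ 2 * al j ^+ 2 / W r k).
    rewrite /t /W -[((k - j)%:~R : R) ^+ 2]real_normK ?num_real // -[((j%:~R : R)) ^+ 2]real_normK ?num_real //.
    field; exact: lt0r_neq0.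
  have e2 : c * P j * Q j = (2 `^ r * (k%:~R : R) ^+ 2 * ((1 + ((k - j)%:~R : R) ^+ 2) `^ r * (1 + (j%:~R : R) ^+ 2) `^ r)) * (be (k - j) ^+ 2 * al j ^+ 2 / W r k).
    rewrite /c /P /Q /W; field; rewrite -/(W r k); exact: lt0r_neq0.
  rewrite e1 e2; apply: ler_wpM2r => //.
  by rewrite mulr_ge0 ?invr_ge0 ?(ltW Wk) ?mulr_ge0 ?sqr_ge0.
have SP N : symS P N <= 2 * B.
  apply: (@le_trans _ _ (2 * symS (fun j => W r (k - j) * nrm2 (b (k - j))) N)).
    rewrite /symS mulr_sumr; apply: ler_sum => i _.
    by rewrite /P [in leRHS]mulrCA ler_wpM2l ?(ltW (W_gt0 _ _)) // ab2.
  by rewrite ler_wpM2l // shifted_bound.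
have SQ N : symS Q N <= 2 * A.
  apply: (@le_trans _ _ (2 * symS (fun j => W r j * nrm2 (a j)) N)).
    rewrite /symS mulr_sumr; apply: ler_sum => i _.
    by rewrite /Q [in leRHS]mulrCA ler_wpM2l ?(ltW (W_gt0 _ _)) // ab2.
  rewrite ler_wpM2l //; apply: (@esum_lower (fun j => W r j * nrm2 (a j))) => //.
  by move=> j; rewrite mulr_ge0 ?nrm2_ge0 ?(ltW (W_gt0 _ _)).
have M0 : 0 <= c * (2 * B) * (2 * A).
  have h1 : 0 <= 2 * B by lra.
  have h2 : 0 <= 2 * A by lra.
  by apply: mulr_ge0; [apply: mulr_ge0|].
have B2 : 0 <= 2 * B by lra.
have St N : symS t N <= Num.sqrt (c * (2 * B) * (2 * A)).
  have h : (symS t N) ^+ 2 <= c * (2 * B) * (2 * A).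
    have hc := CS ((2 * N).+1) (fun i => t (i%:Z - N%:Z))
       (fun i => P (i%:Z - N%:Z)) (fun i => Q (i%:Z - N%:Z)) c c0
       (fun i => t0 _) (fun i => P0 _) (fun i => Q0 _) (fun i => tPQ _).
    have hc2 : (symS t N) ^+ 2 <= c * symS P N * symS Q N := hc.
    apply: le_trans hc2 _.
    apply: ler_pM; [exact: mulr_ge0 c0 (S_ge0 P N P0) | exact: (S_ge0 Q N Q0) | | exact: SQ].
    by apply: ler_wpM2l.
  rewrite -(ger0_norm (S_ge0 t N t0)) -sqrtr_sqr; exact: ler_wsqrtr.
have Sx N : symS (fun j => `|complex.Re (absD 1 b (k - j) * absD 1 a j)| +
                          `|complex.Im (absD 1 b (k - j) * absD 1 a j)|) N
            <= Num.sqrt (c * (2 * B) * (2 * A)).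
  apply: le_trans (St N); apply: ler_sum => i _.
  apply: le_trans (prodRI _ _) _.
  rewrite !absD1_Re !absD1_Im !normrM !normr_id.
  by rewrite le_eqVlt; apply/orP; left; apply/eqP; rewrite /t /al /be; ring.
have := zsum_bound _ _ Sx.
rewrite sqr_sqrtr // /nrm2 /fconv => h.
apply: le_trans h _.
by rewrite le_eqVlt; apply/orP; left; apply/eqP; ring.
Qed.

Lemma Hs_ge0 (r : R) (c : int -> R[i]) : (0 <= Hsnorm2 r c)%E.
Proof.
apply: esum_ge0 => j _.
by rewrite lee_fin mulr_ge0 ?addr_ge0 ?sqr_ge0 ?powR_ge0.
Qed.

Lemma fin_of (r : R) (c : int -> R[i]) : (Hnorm r c < +oo)%E ->
  exists A, [/\ 0 <= A, Hsnorm2 r c = A%:E & Hnorm r c = (Num.sqrt A)%:E].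
Proof.
have := Hs_ge0 r c; rewrite /Hnorm.
case: (Hsnorm2 r c) => [A| |] //= A0 _.
by exists A; split.
Qed.

Lemma fin_le (r : R) (c : int -> R[i]) (M : R) : (Hsnorm2 r c <= M%:E)%E ->
  exists X, [/\ 0 <= X, X <= M & Hnorm r c = (Num.sqrt X)%:E].
Proof.
have := Hs_ge0 r c; rewrite /Hnorm.
case: (Hsnorm2 r c) => [X| |] //= X0 XM.
by exists X; split.
Qed.

Lemma lemma5_sec (r : R) (hr : 1 <= r) :
  exists C : R, 0 < C /\
    forall f g : R -> R[i], inHr r f -> inHr r g ->
      (Hnorm r (absD (-2) (fconv (absD 1 (fhat g)) (absD 1 (fhat f))))
        <= C%:E * Hnorm r (fhat f) * Hnorm r (fhat g))%E.
Proof.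
exists (Num.sqrt (16 * 2 `^ r)); split.
  by rewrite sqrtr_gt0 mulr_gt0 // powR_gt0.
move=> f g [_ [_ Hf]] [_ [_ Hg]].
have [A [A0 HA ->]] := fin_of _ _ Hf.
have [B [B0 HB ->]] := fin_of _ _ Hg.
set cv := fconv (absD 1 (fhat g)) (absD 1 (fhat f)).
have p0 := powR_ge0 2 r.
have key : forall k, W r k * nrm2 (absD (-2) cv k) <= (4 * 2 `^ r * A * B) * hh k.
  move=> k; rewrite absDm2_nrm2.
  have [->|k0] := eqVneq k 0.
    have -> : hh 0 = 0 by rewrite /hh /= expr0n /= invr0.
    by rewrite !(expr0n, mul0r, mulr0).
  have := conv_bound _ _ _ _ _ _ hr HA HB k0; rewrite -/cv => hc.
  have Wk := W_gt0 r k.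
  apply: (@le_trans _ _ (W r k * (hh k ^+ 2 * (4 * (2 `^ r * (k%:~R : R) ^+ 2 / W r k) * A * B)))).
    apply: ler_wpM2l; first exact: ltW.
    by apply: ler_wpM2l; rewrite ?sqr_ge0.
  have kk : (k%:~R : R) ^+ 2 != 0 by rewrite sqrf_eq0 intr_eq0.
  rewrite le_eqVlt; apply/orP; left; apply/eqP; rewrite /hh.
  by field; rewrite intr_eq0 k0 (lt0r_neq0 Wk).
have Hle : (Hsnorm2 r (absD (-2) cv) <= (4 * (4 * 2 `^ r * A * B))%:E)%E.
  have c0 : 0 <= 4 * 2 `^ r * A * B by rewrite !mulr_ge0.
  apply: le_trans (esum_hh _ c0).
  by apply: le_esum => k _; rewrite lee_fin; exact: key.
have [X [X0 XM ->]] := fin_le _ _ _ Hle.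
rewrite -!EFinM lee_fin -!sqrtrM ?mulr_ge0 //.
apply: ler_wsqrtr.
by rewrite le_eqVlt in XM; move: XM; rewrite -(mulrA 4) -!mulrA; nra.
Qed.

End L5.

Local Close Scope classical_set_scope.

Theorem lemma5 (R : realType) (r : R) (hr : 1 <= r) :
  exists C : R, 0 < C /\
    forall f g : R -> R[i], inHr r f -> inHr r g ->
      (Hnorm r (absD (-2) (fconv (absD 1 (fhat g)) (absD 1 (fhat f))))
        <= C%:E * Hnorm r (fhat f) * Hnorm r (fhat g))%E.
Proof. exact: lemma5_sec hr. Qed.
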